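(* Let $q$ be a prime power and $G=\mathrm{PGL}_3(q)$ acting on the points of $\mathrm{PG}_2(q)$. The maximal size of an independent set of the derangement graph $\Gamma_G$ is $q^3(q^2-1)(q-1)$.
   Context: A derangement is an element fixing no point of $\mathrm{PG}_2(q)$. The derangement graph $\Gamma_G$ has vertex set $G$, with $g,h$ adjacent iff $gh^{-1}$ is a derangement. *)

(* Defs.v *)
From HB Require Import structures.
From mathcomp Require Import all_boot all_order all_algebra all_fingroup.
Set Implicit Arguments. Unset Strict Implicit. Unset Printing Implicit Defensive.
Import GRing.Theory.
Local Open Scope ring_scope.

Section PG2.
Variable F : finFieldType.

Definition vset := {set 'rV[F]_3}.

Definition span1 (v : 'rV[F]_3) : vset := [set c *: v | c in [set: F]].

Definition PG2_points : {set vset} :=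
  [set span1 v | v in [set v : 'rV[F]_3 | v != 0]].

Definition mx_act (g : 'M[F]_3) (P : vset) : vset := [set w *m g | w in P].

(* PGL_3(F) as a permutation group on points: the permutations induced by
   invertible 3x3 matrices on the points of PG_2(F) (acting trivially on the
   other elements of the ambient type vset, which are not points). *)
Definition PGL3 : {set {perm vset}} :=
  [set s : {perm vset} | [exists g : 'M[F]_3, (g \in unitmx) &&
      [forall P : vset, s P == (if P \in PG2_points then mx_act g P else P)]]].

Definition derangement (s : {perm vset}) : bool :=
  [forall P in PG2_points, s P != P].

Definition derangement_adj (g h : {perm vset}) : bool :=
  derangement (g * h^-1)%g.

Definition independent (S : {set {perm vset}}) : bool :=
  (S \subset PGL3) && [forall g in S, forall h in S, ~~ derangement_adj g h].

End PG2.

(* Main.v *)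
Require Import Defs.
From mathcomp Require Import all_boot all_order all_algebra all_fingroup.
From mathcomp Require Import ring zify.
Set Implicit Arguments. Unset Strict Implicit. Unset Printing Implicit Defensive.
Import GRing.Theory.

Section Cubic.
Local Open Scope ring_scope.
Variable F : finFieldType.

Lemma exists_rootless :
  exists s t u : F, forall a : F, a ^+ 3 + s * a ^+ 2 + t * a + u != 0.
Proof.
have [/existsP[[[s t] u] /forallP H]|] :=
  boolP [exists x : F * F * F, [forall a : F, a ^+ 3 + x.1.1 * a ^+ 2 + x.1.2 * a + x.2 != 0]].
  by exists s, t, u => a; apply: H.
rewrite negb_exists => /forallP Hn.
pose phi (x : F * F * F) : F * F * F := (x.1.2 - x.1.1, x.2 - x.1.1 * x.1.2, - (x.1.1 * x.2)).
have surj : [set: F * F * F] \subset phi @: setT.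
  apply/subsetP => [[[s t] u]] _.
  have := Hn (s, t, u); rewrite negb_forall => /existsP[a /negPn /eqP /= Ha].
  apply/imsetP; exists (a, s + a, t + a * s + a ^+ 2) => //=.
  congr (_, _, _) => /=; [ring | ring |].
  by transitivity (u - (a ^+ 3 + s * a ^+ 2 + t * a + u)); [rewrite Ha subr0 | ring].
have : #|phi @: setT| == #|[set: F * F * F]|.
  by rewrite eqn_leq (subset_leq_card surj) andbT; apply: subset_leq_card; apply: subsetT.
move/imset_injP => inj.
have E : phi ((0 : F), (-1 : F), (0 : F)) = phi ((1 : F), (0 : F), (0 : F)).
  by rewrite /phi /=; congr (_, _, _); ring.
have := inj _ _ (in_setT _) (in_setT _) E.
by case=> /eqP; rewrite eq_sym oner_eq0.
Qed.
End Cubic.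

Section Field3.
Local Open Scope ring_scope.
Variable F : finFieldType.

Definition Mv (C : 'M[F]_3) (w : 'rV[F]_3) : 'M[F]_3 :=
  w 0 0 *: 1%:M + w 0 1 *: C + w 0 2 *: (C *m C).

Lemma exists_field_mx : exists C : 'M[F]_3, forall w, w != 0 -> Mv C w \in unitmx.
Proof.
have [s [t [u Hr]]] := exists_rootless F.
pose r : {poly F} := s *: 'X^2 + t *: 'X + u%:P.
pose p : {poly F} := 'X^3 + r.
have szr : (size r <= 3)%N.
  apply: (leq_trans (size_add _ _)); rewrite geq_max; apply/andP; split.
    apply: (leq_trans (size_add _ _)); rewrite geq_max; apply/andP; split.
      by apply: (leq_trans (size_scale_leq _ _)); rewrite size_polyXn.
    by apply: (leq_trans (size_scale_leq _ _)); rewrite size_polyX.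
  by apply: (leq_trans (size_polyC_leq1 _)).
have szp : size p = 4%N by rewrite /p size_addl size_polyXn // ltnS.
have pmon : p \is monic.
  by rewrite monicE /p lead_coefDl ?lead_coefXn // size_polyXn ltnS.
have noroot : forall a, ~~ root p a.
  move=> a; rewrite /root /p /r !hornerD !hornerZ !hornerXn hornerX hornerC; apply: contra (Hr a) => /eqP H.
  by apply/eqP; rewrite -H; ring.
have : exists C : 'M[F]_3, char_poly C = p.
  have : forall n (A : 'M[F]_n), n = 3%N -> char_poly A = p -> exists C : 'M[F]_3, char_poly C = p.
    by move=> n A hn hA; subst n; exists A.
  by apply; [exact: (congr1 predn szp) | apply: companionmxK].
case=> C hC; exists C => w w0.
pose rw : {poly F} := (w 0 0)%:P + w 0 1 *: 'X + w 0 2 *: 'X^2.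
have hM : horner_mx C rw = Mv C w.
  rewrite /rw /Mv !rmorphD /= horner_mx_C -!mul_polyC !rmorphM /= !horner_mx_C.
  by rewrite horner_mx_X -!mulmxE !mul_scalar_mx scalemx1.
have rw0 : rw != 0.
  apply: contra w0 => /eqP rw0; apply/eqP/matrixP => i j; rewrite ord1 mxE.
  have c0 := congr1 (fun P : {poly F} => P`_0) rw0.
  have c1 := congr1 (fun P : {poly F} => P`_1) rw0.
  have c2 := congr1 (fun P : {poly F} => P`_2) rw0.
  move: c0 c1 c2; rewrite /rw !coefE /=.
  case: j => [[|[|[|//]]] ?] /=; rewrite ?(mulr0, mulr1, addr0, add0r, subr0) => c0 c1 c2.
  - by rewrite -c0; congr (w _ _); apply: val_inj.
  - by rewrite -c1; congr (w _ _); apply: val_inj.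
  - by rewrite -c2; congr (w _ _); apply: val_inj.
have szrw : (size rw <= 3)%N.
  apply: (leq_trans (size_add _ _)); rewrite geq_max; apply/andP; split.
    apply: (leq_trans (size_add _ _)); rewrite geq_max; apply/andP; split.
      by apply: (leq_trans (size_polyC_leq1 _)).
    by apply: (leq_trans (size_scale_leq _ _)); rewrite size_polyX.
  by apply: (leq_trans (size_scale_leq _ _)); rewrite size_polyXn.
have p0 : p != 0 by rewrite -size_poly_gt0 szp.
have cop : coprimep rw p.
  rewrite coprimep_def; set d := gcdp rw p.
  have d0 : d != 0 by rewrite gcdp_eq0 negb_and p0 orbT.
  have szd : (size d <= 3)%N.
    exact: leq_trans (dvdp_leq rw0 (dvdp_gcdl rw p)) szrw.
  have h1 : (0 < size d)%N by rewrite size_poly_gt0.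
  have h2 : ~~ (1 < size d)%N.
    apply/negP => hd.
    have p4 : (size p <= 4)%N by rewrite szp.
    have hdp : (1 < size d < size p)%N by rewrite hd szp ltnS.
    have [x hx] := reducible_cubic_root p4 hdp (dvdp_gcdr rw p).
    by have := noroot x; rewrite hx.
  by rewrite eqn_leq leqNgt h2 h1.
have [[v1 v2] /= hv] := Bezout_eq1_coprimepP _ _ cop.
have CH : horner_mx C p = 0 by rewrite -hC; apply: Cayley_Hamilton.
have := congr1 (horner_mx C) hv.
rewrite rmorphD !rmorphM /= CH mulr0 addr0 rmorph1 hM => H.
by case: (mulmx1_unit H).
Qed.
End Field3.

Section PG.
Local Open Scope ring_scope.
Variable F : finFieldType.
Notation pts := (PG2_points F).
Notation vT := 'rV[F]_3.

Lemma span1P (v w : vT) : reflect (exists c, w = c *: v) (w \in span1 v).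
Proof.
apply: (iffP imsetP) => [[c _ ->]|[c ->]]; first by exists c.
by exists c; rewrite ?inE.
Qed.

Lemma span1_mem (v : vT) : v \in span1 v.
Proof. by apply/span1P; exists 1; rewrite scale1r. Qed.

Lemma span1_scale c (v : vT) : c != 0 -> span1 (c *: v) = span1 v.
Proof.
move=> c0; apply/setP => w; apply/span1P/span1P => [[d ->]|[d ->]].
  by exists (d * c); rewrite scalerA.
by exists (d / c); rewrite scalerA divfK.
Qed.

Lemma span1_eq (v w : vT) : v != 0 -> span1 v = span1 w ->
  exists2 c, c != 0 & w = c *: v.
Proof.
move=> v0 e; have := span1_mem v; rewrite e => /span1P[c vc].
have c0 : c != 0 by apply: contraNneq v0 => c0; rewrite vc c0 scale0r.
by exists c^-1; rewrite ?invr_eq0 // vc scalerA mulVf // scale1r.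
Qed.

Lemma ptsP (P : vset F) : reflect (exists2 v : vT, v != 0 & P = span1 v) (P \in pts).
Proof.
apply: (iffP imsetP) => [[v]|[v v0 ->]]; first by rewrite inE => v0 ->; exists v.
by exists v; rewrite ?inE.
Qed.

Lemma mx_act_span (g : 'M[F]_3) (v : vT) : mx_act g (span1 v) = span1 (v *m g).
Proof.
apply/setP => w; apply/imsetP/span1P => [[u /span1P[c ->] ->]|[c ->]].
  by exists c; rewrite scalemxAl.
by exists (c *: v); [apply/span1P; exists c | rewrite scalemxAl].
Qed.

Lemma mx_act_comp (g h : 'M[F]_3) (P : vset F) : mx_act (g *m h) P = mx_act h (mx_act g P).
Proof.
apply/setP => w; apply/imsetP/imsetP => [[u uP ->]|[x /imsetP[u uP ->] ->]].
  by exists (u *m g); [apply/imsetP; exists u | rewrite mulmxA].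
by exists u; rewrite // mulmxA.
Qed.

Lemma mx_act1 (P : vset F) : mx_act 1%:M P = P.
Proof.
apply/setP => w; apply/imsetP/idP => [[u uP ->]|wP]; first by rewrite mulmx1.
by exists w; rewrite ?mulmx1.
Qed.

Lemma mx_act_pts (g : 'M[F]_3) (P : vset F) : g \in unitmx -> P \in pts -> mx_act g P \in pts.
Proof.
move=> gu /ptsP[v v0 ->]; apply/ptsP; exists (v *m g); last exact: mx_act_span.
apply: contra v0 => /eqP vg0; apply/eqP.
by rewrite -[v]mulmx1 -(mulmxV gu) mulmxA vg0 mul0mx.
Qed.

Definition pact (g : 'M[F]_3) (P : vset F) :=
  if (g \in unitmx) && (P \in pts) then mx_act g P else P.

Lemma act_inj g : injective (pact g).
Proof.
move=> P Q; rewrite /pact; case: (boolP (g \in unitmx)) => //= gu.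
case: (boolP (P \in pts)) => PP; case: (boolP (Q \in pts)) => QP.
- case/ptsP: PP => v v0 ->; case/ptsP: QP => w w0 ->.
  rewrite !mx_act_span => e.
  have vg0 : v *m g != 0.
    apply: contra v0 => /eqP vg0; apply/eqP.
    by rewrite -[v]mulmx1 -(mulmxV gu) mulmxA vg0 mul0mx.
  have [c c0 ec] := span1_eq vg0 e.
  have -> : w = c *: v.
    by rewrite -[w]mulmx1 -(mulmxV gu) mulmxA ec -scalemxAl -mulmxA mulmxV // mulmx1.
  by rewrite span1_scale.
- by move=> e; rewrite -e mx_act_pts in QP.
- by move=> e; rewrite e mx_act_pts in PP.
- by [].
Qed.

Definition pm g : {perm vset F} := perm (@act_inj g).

Lemma pmE g (P : vset F) : pm g P = pact g P.
Proof. by rewrite permE. Qed.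

Lemma pm_PGL g : g \in unitmx -> pm g \in PGL3 F.
Proof.
move=> gu; rewrite inE; apply/existsP; exists g; rewrite gu /=.
by apply/forallP => P; rewrite pmE /pact gu.
Qed.

Lemma PGL3P s : reflect (exists2 g, g \in unitmx & s = pm g) (s \in PGL3 F).
Proof.
apply: (iffP idP) => [|[g gu ->]]; last exact: pm_PGL.
rewrite inE => /existsP[g /andP[gu /forallP H]]; exists g => //.
by apply/permP => P; rewrite pmE /pact gu (eqP (H P)).
Qed.

Lemma pmM g h : g \in unitmx -> h \in unitmx -> pm (g *m h) = (pm g * pm h)%g.
Proof.
move=> gu hu; apply/permP => P; rewrite permM !pmE /pact unitmx_mul gu hu /=.
case: (boolP (P \in pts)) => PP; last by rewrite (negPf PP).
by rewrite mx_act_pts // mx_act_comp.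
Qed.

Lemma pm1 : pm 1%:M = 1%g.
Proof. by apply/permP => P; rewrite perm1 pmE /pact; case: ifP; rewrite ?mx_act1. Qed.

Lemma pmV g : g \in unitmx -> ((pm g)^-1)%g = pm (invmx g).
Proof.
move=> gu; apply/eqP; rewrite eq_invg_mul -pmM ?unitmx_inv //.
by rewrite mulmxV // pm1.
Qed.

Lemma group_PGL3 : group_set (PGL3 F).
Proof.
apply/group_setP; split; first by rewrite -pm1 pm_PGL ?unitmx1.
move=> x y /PGL3P[g gu ->] /PGL3P[h hu ->].
by rewrite -pmM // pm_PGL // unitmx_mul gu.
Qed.

End PG.
Arguments pm {F} g.
Arguments pact {F} g P.

Section Ker.
Local Open Scope ring_scope.
Variable F : finFieldType.
Notation vT := 'rV[F]_3.

Lemma fix_scalar (g : 'M[F]_3) :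
  (forall v : vT, v != 0 -> exists c, v *m g = c *: v) -> exists c, g = c%:M.
Proof.
move=> H.
have off : forall i j : 'I_3, i != j -> g i j = 0.
  move=> i j ij.
  have d0 : delta_mx 0 i != 0 :> vT.
    apply/eqP => /matrixP /(_ 0 i); rewrite !mxE !eqxx /= => /eqP.
    by rewrite oner_eq0.
  have [c hc] := H _ d0.
  have := congr1 (fun M : vT => M 0 j) hc; rewrite -rowE !mxE /= => ->.
  by rewrite eq_sym (negPf ij) mulr0.
have k0 : const_mx 1 != 0 :> vT.
  by apply/eqP => /matrixP /(_ 0 0); rewrite !mxE => /eqP; rewrite oner_eq0.
have [c hc] := H _ k0.
exists c; apply/matrixP => i j; rewrite !mxE.
have := congr1 (fun M : vT => M 0 j) hc; rewrite !mxE mulr1.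
rewrite (bigD1 j) //= big1 => [|k kj]; last by rewrite mxE mul1r off.
rewrite mxE mul1r addr0 => gjj.
case: (eqVneq i j) => [->|ij]; first by rewrite gjj /= mulr1n.
by rewrite off // mulr0n.
Qed.

End Ker.

Section Nrm.
Local Open Scope ring_scope.
Variable F : finFieldType.
Notation vT := 'rV[F]_3.

Definition nv (a b c : F) : vT :=
  \row_(j < 3) (if nat_of_ord j == 0%N then a else if nat_of_ord j == 1%N then b else c).

Lemma nv0 a b c : nv a b c 0 0 = a. Proof. by rewrite mxE. Qed.
Lemma nv1 a b c : nv a b c 0 1 = b. Proof. by rewrite mxE. Qed.
Lemma nv2 a b c : nv a b c 0 2 = c. Proof. by rewrite mxE. Qed.

Lemma coord_eq (w1 w2 : vT) :
  w1 0 0 = w2 0 0 -> w1 0 1 = w2 0 1 -> w1 0 2 = w2 0 2 -> w1 = w2.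
Proof.
move=> e0 e1 e2; apply/matrixP => i j; rewrite ord1.
case: j => [[|[|[|//]]] Hj].
- by have -> : Ordinal Hj = 0 by apply: val_inj.
- by have -> : Ordinal Hj = 1 by apply: val_inj.
- by have -> : Ordinal Hj = 2 by apply: val_inj.
Qed.

Lemma nvK (w : vT) : w = nv (w 0 0) (w 0 1) (w 0 2).
Proof. by apply: coord_eq; rewrite ?nv0 ?nv1 ?nv2. Qed.

Lemma scale_nv (l a b c : F) : l *: nv a b c = nv (l * a) (l * b) (l * c).
Proof. by apply: coord_eq; rewrite mxE ?nv0 ?nv1 ?nv2. Qed.

Lemma nv_inj a b c a' b' c' : nv a b c = nv a' b' c' -> [/\ a = a', b = b' & c = c'].
Proof.
move=> e; split; [have := congr1 (fun w : vT => w 0 0) e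
 | have := congr1 (fun w : vT => w 0 1) e | have := congr1 (fun w : vT => w 0 2) e];
  by rewrite /= ?nv0 ?nv1 ?nv2.
Qed.

Definition Nrm : {set vT} :=
  [set nv 1 p.1 p.2 | p in [set: F * F]] :|: [set nv 0 1 c | c in [set: F]]
    :|: [set nv 0 0 1].

Lemma NrmP w : w \in Nrm ->
  [\/ exists b c, w = nv 1 b c, exists c, w = nv 0 1 c | w = nv 0 0 1].
Proof.
rewrite !inE => /orP[/orP[/imsetP[[b c] _ ->]|/imsetP[c _ ->]]|/eqP->].
- by apply: Or31; exists b, c.
- by apply: Or32; exists c.
- exact: Or33.
Qed.

Lemma Nrm_ne0 w : w \in Nrm -> w != 0.
Proof.
move=> /NrmP[[b [c ->]]|[c ->]|->]; apply/eqP => /(congr1 (fun w : vT => w)).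
- by move/(congr1 (fun w : vT => w 0 0)); rewrite nv0 mxE => /eqP; rewrite oner_eq0.
- by move/(congr1 (fun w : vT => w 0 1)); rewrite nv1 mxE => /eqP; rewrite oner_eq0.
- by move/(congr1 (fun w : vT => w 0 2)); rewrite nv2 mxE => /eqP; rewrite oner_eq0.
Qed.

Lemma Nrm_prop w1 w2 l : w1 \in Nrm -> w2 \in Nrm -> w1 = l *: w2 -> w1 = w2.
Proof.
move=> h1 h2; have n1 := Nrm_ne0 h1.
case/NrmP: h1 n1 => [[b [c ->]]|[c ->]|->] n1;
case/NrmP: h2 => [[b' [c' ->]]|[c' ->]|->]; rewrite scale_nv => /nv_inj[];
  rewrite ?(mulr0, mulr1) => e0 e1 e2; subst => //;
  try (by move/eqP: e0; rewrite oner_eq0);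
  try (by move/eqP: e1; rewrite oner_eq0);
  try (by move/eqP: e2; rewrite oner_eq0);
  try (by rewrite ?mul1r);
  try (by move: n1; rewrite ?mul0r eqxx);
  try (by move/eqP: e1; rewrite mul0r oner_eq0);
  try (by move/eqP: e2; rewrite mul0r oner_eq0).
Qed.

Lemma card_Nrm : #|Nrm| = (#|F| ^ 2 + #|F| + 1)%N.
Proof.
set A1 := [set nv 1 p.1 p.2 | p in [set: F * F]].
set A2 := [set nv 0 1 c | c in [set: F]].
have c1 : #|A1| = (#|F| ^ 2)%N.
  rewrite card_imset ?cardsT ?card_prod ?expn2 // => [[b c] [b' c']] /nv_inj[_ /= -> ->] //.
have c2 : #|A2| = #|F|.
  by rewrite card_imset ?cardsT // => c c' /nv_inj[].
have d12 : A1 :&: A2 = set0.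
  apply/setP => w; rewrite !inE; apply/negP => /andP[/imsetP[p _ ->] /imsetP[c _]].
  by case/nv_inj => /eqP; rewrite oner_eq0.
have d3 : (A1 :|: A2) :&: [set nv 0 0 1] = set0.
  apply/setP => w; rewrite !inE; apply/negP => /andP[/orP[/imsetP[p _ ->]|/imsetP[c _ ->]]].
    by move/eqP/nv_inj => [/eqP]; rewrite oner_eq0.
  by move/eqP/nv_inj => [_ /eqP]; rewrite oner_eq0.
rewrite /Nrm cardsU d3 cards0 subn0 cardsU d12 cards0 subn0 cards1 c1 c2.
by [].
Qed.

Lemma Nrm_rep (v : vT) : v != 0 -> exists2 w, w \in Nrm & exists2 c, c != 0 & v = c *: w.
Proof.
move=> v0.
have [a0|a0] := eqVneq (v 0 0) 0.
  have [b0|b0] := eqVneq (v 0 1) 0.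
    have [c0|c0] := eqVneq (v 0 2) 0.
      suff z : v = 0 by rewrite z eqxx in v0.
      by apply: coord_eq; rewrite mxE.
    exists (nv 0 0 1); first by rewrite !inE eqxx orbT.
    exists (v 0 2) => //; apply: coord_eq; rewrite mxE ?nv0 ?nv1 ?nv2 ?mulr0 ?mulr1 //.
  exists (nv 0 1 (v 0 2 / v 0 1)).
    by rewrite !inE; apply/orP; left; apply/orP; right; apply/imsetP; exists (v 0 2 / v 0 1).
  exists (v 0 1) => //; apply: coord_eq; rewrite mxE ?nv0 ?nv1 ?nv2 ?mulr0 ?mulr1 //.
  by rewrite mulrC divfK.
exists (nv 1 (v 0 1 / v 0 0) (v 0 2 / v 0 0)).
  by rewrite !inE; apply/orP; left; apply/orP; left; apply/imsetP; exists (v 0 1 / v 0 0, v 0 2 / v 0 0).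
exists (v 0 0) => //; apply: coord_eq; rewrite mxE ?nv0 ?nv1 ?nv2 ?mulr1 //;
  by rewrite mulrC divfK.
Qed.

End Nrm.
Arguments Nrm {F}.

Section Count.
Local Open Scope ring_scope.
Variable F : finFieldType.
Notation vT := 'rV[F]_3.
Notation pts := (PG2_points F).

Definition Umx : {set 'M[F]_3} := [set g | g \in unitmx].

Lemma card_Umx : #|Umx| =
  (#|F| ^ 3 * ((#|F| ^ 1 - 1) * (#|F| ^ 2 - 1) * (#|F| ^ 3 - 1)))%N.
Proof.
have := @card_GL F 3 isT.
rewrite cardsT card_sub => e.
transitivity #|[pred x : 'M[F]_3 | x \is a GRing.unit]|.
  by apply: eq_card => g; rewrite !inE.
rewrite e; congr (_ * _)%N.
by rewrite big_ltn // big_ltn // big_nat1 mulnA.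
Qed.

Lemma PGL3_imset : PGL3 F = pm @: Umx.
Proof.
apply/setP => s; apply/PGL3P/imsetP => [[g gu ->]|[g]]; first by exists g; rewrite ?inE.
by rewrite inE => gu ->; exists g.
Qed.

Lemma pm_scale c (g : 'M[F]_3) : c != 0 -> pm (c *: g) = pm g.
Proof.
move=> c0; apply/permP => P; rewrite !pmE /pact unitmxZ ?unitfE //.
case: (boolP (g \in unitmx)) => //= gu; case: (boolP (P \in pts)) => //= /ptsP[v v0 ->].
by rewrite !mx_act_span -scalemxAr span1_scale.
Qed.

Lemma scale_inj (g : 'M[F]_3) c d : g \in unitmx -> c *: g = d *: g -> c = d.
Proof.
move=> gu e; have := congr1 (fun M => (M *m invmx g) 0 0) e.
by rewrite /= -!scalemxAl mulmxV // !scalemx1 !mxE.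
Qed.

Lemma fiberE g0 : g0 \in Umx ->
  [set g in Umx | pm g == pm g0] = [set c *: g0 | c in [set~ 0]].
Proof.
rewrite inE => g0u; apply/setP => g; rewrite !inE.
apply/andP/imsetP => [[gu /eqP e]|[c]]; last first.
  rewrite !inE => c0 ->; split; first by rewrite unitmxZ ?unitfE.
  by rewrite pm_scale.
pose h := g *m invmx g0.
have hu : h \in unitmx by rewrite unitmx_mul gu unitmx_inv.
have h1 : pm h = 1%g by rewrite pmM ?unitmx_inv // -pmV // e mulgV.
have [c hc] : exists c, h = c%:M.
  apply: fix_scalar => v v0.
  have := congr1 (fun s : {perm vset F} => s (span1 v)) h1.
  rewrite /= perm1 pmE /pact hu /= (_ : span1 v \in pts); last by apply/ptsP; exists v.
  rewrite mx_act_span => ev.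
  by have := span1_mem (v *m h); rewrite ev => /span1P.
have eg : g = c *: g0 by rewrite -mul_scalar_mx -hc /h mulmxKV.
exists c => //; rewrite !inE; apply: contraTneq gu => c0.
by rewrite eg c0 scale0r unitmxE det0 unitr0.
Qed.

Lemma card_PGL3 : (#|PGL3 F| * (#|F| - 1))%N = #|Umx|.
Proof.
rewrite PGL3_imset -[#|Umx|]sum1_card (partition_big_imset pm) /= -sum_nat_const.
apply: eq_bigr => s /imsetP[g0 g0U ->].
rewrite sum1dep_card.
have -> : [set x | (x \in Umx) && (pm x == pm g0)] = [set g in Umx | pm g == pm g0] by [].
rewrite fiberE // card_in_imset ?cardsC1 ?subn1 //.
by move=> c d _ _; apply: scale_inj; rewrite inE in g0U.
Qed.

End Count.

Section Final.
Local Open Scope ring_scope.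
Variable F : finFieldType.
Notation vT := 'rV[F]_3.
Notation pts := (PG2_points F).

Lemma Mv_lin (C : 'M[F]_3) (w1 w2 : vT) l :
  Mv C (w1 - l *: w2) = Mv C w1 - l *: Mv C w2.
Proof. by apply/matrixP => i j; rewrite !mxE; ring. Qed.

Lemma pts_card : (#|pts| <= #|F| ^ 2 + #|F| + 1)%N.
Proof.
rewrite -card_Nrm; have := leq_imset_card (@span1 F) Nrm; apply: leq_trans.
apply/subset_leq_card/subsetP => P /ptsP[v v0 ->].
have [w wN [c c0 ->]] := Nrm_rep v0.
by rewrite span1_scale //; apply/imsetP; exists w.
Qed.

Lemma P0_pts : span1 (nv (0 : F) 0 1) \in pts.
Proof.
apply/ptsP; exists (nv 0 0 1) => //; apply: Nrm_ne0.
by rewrite !inE eqxx orbT.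
Qed.

Lemma not_der1 : ~~ derangement (1%g : {perm vset F}).
Proof.
apply/forallP => /(_ (span1 (nv 0 0 1))); rewrite P0_pts /= perm1.
by rewrite eqxx.
Qed.

Variable Cm : 'M[F]_3.
Hypothesis hCm : forall w, w != 0 -> Mv Cm w \in unitmx.

Lemma MvN_unit w : w \in Nrm -> Mv Cm w \in unitmx.
Proof. by move=> wN; apply: hCm; apply: Nrm_ne0. Qed.

Lemma der_clique w1 w2 : w1 \in Nrm -> w2 \in Nrm -> w1 != w2 ->
  derangement (pm (Mv Cm w1) * (pm (Mv Cm w2))^-1)%g.
Proof.
move=> h1 h2 w12; set g1 := Mv Cm w1; set g2 := Mv Cm w2.
have u1 : g1 \in unitmx by apply: MvN_unit.
have u2 : g2 \in unitmx by apply: MvN_unit.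
rewrite pmV // -pmM ?unitmx_inv //; set h := g1 *m invmx g2.
have hu : h \in unitmx by rewrite unitmx_mul u1 unitmx_inv.
apply/forallP => P; apply/implyP => PP; move: (PP) => /ptsP[v v0 ->].
rewrite pmE /pact hu /= (_ : span1 v \in pts) ?mx_act_span; last by apply/ptsP; exists v.
apply/eqP => ev.
have := span1_mem (v *m h); rewrite ev => /span1P[l hl].
have e1 : v *m (Mv Cm (w1 - l *: w2)) = 0.
  rewrite Mv_lin mulmxBr -/g1 -/g2 -scalemxAr.
  have -> : v *m g1 = (v *m h) *m g2 by rewrite /h -!mulmxA mulVmx // mulmx1.
  by rewrite hl -scalemxAl subrr.
have nz : w1 - l *: w2 != 0.
  apply: contra w12; rewrite subr_eq0 => /eqP e.
  by apply/eqP; apply: Nrm_prop e.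
have := hCm nz => uu.
move: v0; rewrite -[v]mulmx1 -(mulmxV uu) mulmxA e1 mul0mx eqxx //.
Qed.

Definition Cset : {set {perm vset F}} := [set pm (Mv Cm w) | w in Nrm].

Lemma card_Cset : #|Cset| = (#|F| ^ 2 + #|F| + 1)%N.
Proof.
rewrite card_in_imset ?card_Nrm // => w1 w2 h1 h2 e.
case: (eqVneq w1 w2) => // w12; exfalso.
have := der_clique h1 h2 w12; rewrite e mulgV; apply/negP; exact: not_der1.
Qed.

Lemma upper (S : {set {perm vset F}}) : independent S ->
  (#|S| * (#|F| ^ 2 + #|F| + 1) <= #|PGL3 F|)%N.
Proof.
case/andP => SG /forallP indep.
pose Gr := Group (@group_PGL3 F).
have CG : Cset \subset PGL3 F.
  apply/subsetP => s /imsetP[w wN ->]; apply: pm_PGL; exact: MvN_unit.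
pose f (x : {perm vset F} * {perm vset F}) := (x.2^-1 * x.1)%g.
rewrite -card_Cset -cardsX -(card_in_imset (f := f)).
  apply: subset_leq_card; apply/subsetP => z /imsetP[[y c] /setXP[yS cC] ->].
  rewrite /f /=.
  have yG : y \in Gr by rewrite (subsetP SG).
  have cG : c \in Gr by rewrite (subsetP CG).
  by have := groupM (groupVr cG) yG.
move=> [y1 c1] [y2 c2] /setXP[y1S c1C] /setXP[y2S c2C]; rewrite /f /= => H.
have e : (y1 * y2^-1 = c1 * c2^-1)%g.
  have -> : y1 = (c1 * (c2^-1 * y2))%g by rewrite -H mulKVg.
  by rewrite !mulgA mulgK.
case: (eqVneq y1 y2) => [ey|ny].
  by subst y2; move: H => /mulIg /invg_inj ->.
exfalso.
case/imsetP: c1C => w1 w1N ec1; case/imsetP: c2C => w2 w2N ec2.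
have nw : w1 != w2.
  apply/eqP => ew; move/eqP: ny; apply.
  by apply/eqP; rewrite eq_mulgV1 e ec1 ec2 ew mulgV.
have := der_clique w1N w2N nw; rewrite -ec1 -ec2 -e.
have := indep y1; rewrite y1S /= => /forallP /(_ y2); rewrite y2S /=.
by rewrite /derangement_adj => /negPf ->.
Qed.

Lemma lower : exists2 S : {set {perm vset F}}, independent S &
  (#|PGL3 F| <= #|S| * (#|F| ^ 2 + #|F| + 1))%N.
Proof.
pose Gr := Group (@group_PGL3 F).
set P0 := span1 (nv (0 : F) 0 1).
exists ('C_Gr[P0 | 'P])%g.
  apply/andP; split; first exact: subsetIl.
  apply/forallP => g; apply/implyP => gS; apply/forallP => h; apply/implyP => hS.
  have := groupM gS (groupVr hS); rewrite inE => /andP[_ /astab1P].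
  rewrite /= apermE /derangement_adj => e.
  by apply/negP => /forallP /(_ P0); rewrite P0_pts e eqxx.
rewrite -(card_orbit_stab 'P%act Gr P0) mulnC leq_mul2l; apply/orP; right.
apply: leq_trans pts_card; apply/subset_leq_card/subsetP => Q /orbitP[s sG <-].
case/PGL3P: sG => g gu ->.
  change (pm g P0 \in pts); rewrite pmE /pact gu P0_pts /= mx_act_pts ?P0_pts //.
Qed.

End Final.

Theorem mainTheorem6 (F : finFieldType) (q : nat) (hq : #|F| = q) :
  (exists S : {set {perm vset F}},
      independent S /\ #|S| = (q ^ 3 * (q ^ 2 - 1) * (q - 1))%N) /\
  (forall S : {set {perm vset F}},
      independent S -> #|S| <= q ^ 3 * (q ^ 2 - 1) * (q - 1))%N.
Proof.
have [Cm hCm] := exists_field_mx F.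
have q1 : (1 < q)%N by rewrite -hq; apply: card_finNzRing_gt1.
have hG : #|PGL3 F| = (q ^ 3 * (q ^ 2 - 1) * (q - 1) * (q ^ 2 + q + 1))%N.
  have := card_PGL3 F; rewrite card_Umx hq => e.
  have qp : (0 < q - 1)%N by rewrite subn_gt0.
  apply/eqP; rewrite -(eqn_pmul2r qp) e; apply/eqP.
  have -> : (q ^ 3 - 1 = (q - 1) * (q ^ 2 + q + 1))%N.
    rewrite !expnS expn0 !muln1; nia.
  rewrite expn1; ring.
have up : forall S : {set {perm vset F}}, independent S ->
    (#|S| <= q ^ 3 * (q ^ 2 - 1) * (q - 1))%N.
  move=> S hS; have := @upper F Cm hCm S hS; rewrite hG hq leq_pmul2r //.
  by rewrite addn1.
split => //.
have [S0 hS0 hc] := @lower F.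
exists S0; split => //; apply/eqP; rewrite eqn_leq up //=.
by move: hc; rewrite hG hq leq_pmul2r // addn1.
Qed.
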